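(* Let $n \ge r \ge 1$, let $\bm U^\star \in \mathbb{R}^{n\times r}$ have rows $\bm u_1^\star,\dots,\bm u_n^\star \in \mathbb{R}^r$ (written as column vectors), and let $\bm M = \bm M^\star := \bm U^\star \bm U^{\star T}$ (noiseless case). Let $\Omega = \{(i,j)\in[n]\times[n] : m_{ij} \ge 0\}$ (ReLU sampling), and let $$F(\bm U) = \tfrac14 \left\| (\bm U\bm U^T - \bm M)_\Omega\right\|_F^2, \qquad \bm U \in \mathbb{R}^{n\times r}.$$ Let $\mathcal{C}_1,\dots,\mathcal{C}_{2^r}$ be the $2^r$ orthants of $\mathbb{R}^r$, ordered so that for each $i\in[2^r-1]$ the sign patterns of $\mathcal{C}_i$ and $\mathcal{C}_{i+1}$ differ in exactly one coordinate. Suppose $[n]$ is partitioned into index sets $J_1,\dots,J_{2^r}$ such that $\bm u_k^\star \in \mathcal{C}_i$ for every $k\in J_i$, and let $\bm U_i^\star \in \mathbb{R}^{|J_i|\times r}$ be the submatrix of $\bm U^\star$ formed by the rows indexed by $J_i$. Assume: (1) $\mathrm{rank}(\bm U_i^\star) = r$ for every $i\in[2^r]$; (2) for every $i \in [2^r-1]$, letting $\Omega_{i+1,i} = \{(k,l)\in J_{i+1}\times J_i : \bm u_k^{\star T}\bm u_l^\star \ge 0\}$, we have $|\Omega_{i+1,i}| \ge r^2$ and the linear span of $\{\bm u_k^\star \bm u_l^{\star T} : (k,l)\in \Omega_{i+1,i}\}$ equals $\mathbb{R}^{r\times r}$. Then $\bm U\in\mathbb{R}^{n\times r}$ is a global minimizer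 of $F$ over $\mathbb{R}^{n\times r}$ if and only if $\bm U\bm U^T = \bm M^\star$.
   Context: For a matrix $\bm A\in\mathbb{R}^{n\times n}$ and $\Omega\subseteq[n]\times[n]$, $(\bm A)_\Omega$ denotes the matrix that agrees with $\bm A$ on entries in $\Omega$ and is zero elsewhere. $[n]=\{1,\dots,n\}$. $m_{ij}$ denotes the $(i,j)$ entry of $\bm M$. *)

(* Defs.v *)
From HB Require Import structures.
From mathcomp Require Import all_boot all_order all_algebra.
From mathcomp Require Import all_classical all_reals.
Set Implicit Arguments. Unset Strict Implicit. Unset Printing Implicit Defensive.
Import Order.TTheory GRing.Theory Num.Theory.
Local Open Scope ring_scope.

Definition maskmx (R : realType) (n : nat) (Om : pred ('I_n * 'I_n))
  (A : 'M[R]_n) : 'M[R]_n :=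
  \matrix_(i, j) (if Om (i, j) then A i j else 0).

Definition frob2 (R : realType) (m p : nat) (A : 'M[R]_(m, p)) : R :=
  \sum_(i < m) \sum_(j < p) A i j ^+ 2.

Definition relu_set (R : realType) (n : nat) (M : 'M[R]_n) : pred ('I_n * 'I_n) :=
  fun p => 0 <= M p.1 p.2.

Definition Fobj (R : realType) (n r : nat) (M : 'M[R]_n) (U : 'M[R]_(n, r)) : R :=
  4^-1 * frob2 (maskmx (relu_set M) (U *m U^T - M)).

Definition in_orthant (R : realType) (r : nat) (s : {ffun 'I_r -> bool})
  (x : 'rV[R]_r) : Prop :=
  forall j : 'I_r, if s j then 0 <= x 0 j else x 0 j <= 0.

(* submatrix of U formed by the rows indexed by A (in increasing order) *)
Definition subrows (R : realType) (n r : nat) (A : {set 'I_n}) (U : 'M[R]_(n, r))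
  : 'M[R]_(#|A|, r) :=
  \matrix_(a, j) U (enum_val a) j.

(* Main.v *)
Require Import Defs.
From HB Require Import structures.
From mathcomp Require Import all_boot all_order all_algebra.
From mathcomp Require Import all_classical all_reals.
Import Order.TTheory GRing.Theory Num.Theory.
Local Open Scope ring_scope.

Lemma tr_sq_eq0 (R : realType) m p (M : 'M[R]_(m, p)) :
  \tr (M^T *m M) = 0 -> M = 0.
Proof.
move=> h; apply/matrixP => a b; rewrite mxE.
have e : \tr (M^T *m M) = \sum_(j < p) \sum_(i < m) M i j ^+ 2.
  by rewrite /mxtrace; apply: eq_bigr => j _; rewrite mxE; apply: eq_bigr => i _; rewrite mxE expr2.
move: h; rewrite e => /psumr_eq0P h.
have h1 : forall j : 'I_p, true -> 0 <= \sum_(i < m) M i j ^+ 2.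
  by move=> j _; apply: sumr_ge0 => i _; apply: sqr_ge0.
have h2 : forall i : 'I_m, true -> 0 <= M i b ^+ 2 by move=> i _; apply: sqr_ge0.
have := (psumr_eq0P h2 (h h1 b isT)) a isT.
by move/eqP; rewrite sqrf_eq0 => /eqP.
Qed.

Lemma block_Q (R : realType) m r (A B : 'M[R]_(m, r)) :
  \rank A = r -> A *m A^T = B *m B^T ->
  exists Q : 'M[R]_r, Q *m Q^T = 1%:M /\ B = A *m Q.
Proof.
move=> rk hG.
have /row_fullP [L hL] : row_full A by rewrite /row_full rk.
have hLt : A^T *m L^T = 1%:M by rewrite -trmx_mul hL trmx1.
exists (L *m B); split.
  by rewrite trmx_mul mulmxA -(mulmxA L) -hG mulmxA hL mul1mx -trmx_mul hL trmx1.
set D := B - A *m (L *m B).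
have e1 : B *m B^T *m L^T *m A^T = A *m A^T.
  by rewrite -hG -(mulmxA A A^T) hLt mulmx1.
have hD : D *m D^T = 0.
  have -> : D^T = B^T - (A *m (L *m B))^T by rewrite /D (raddfB (@trmx R m r)).
  rewrite /D !trmx_mul mulmxBl !mulmxBr.
  rewrite !mulmxA e1.
  have e2 : A *m L *m B *m B^T = A *m A^T.
    by rewrite -(mulmxA _ B) -hG -!mulmxA (mulmxA L) hL mul1mx.
  rewrite e2.
  have e3 : A *m A^T *m L^T *m A^T = A *m A^T.
    by rewrite -(mulmxA A A^T) hLt mulmx1.
  by rewrite e3 -hG !subrr.
have : \tr (D^T *m D) = 0 by rewrite mxtrace_mulC hD mxtrace0.
by move/tr_sq_eq0 => /eqP; rewrite /D subr_eq0 mulmxA => /eqP.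
Qed.

Lemma span_zero (R : realType) n r (Us : 'M[R]_(n, r)) (Om : {set 'I_n * 'I_n})
  (P : 'M[R]_r) :
  (forall p, p \in Om -> (row p.1 Us *m P *m (row p.2 Us)^T) 0 0 = 0) ->
  (forall A : 'M[R]_r, exists c : 'I_n * 'I_n -> R,
        A = \sum_(p in Om) c p *: ((row p.1 Us)^T *m row p.2 Us)) ->
  P = 0.
Proof.
move=> h hs; apply: tr_sq_eq0.
have [c hc] := hs P.
rewrite {2}hc mulmx_sumr raddf_sum /=; apply: big1 => p hp.
rewrite -scalemxAr linearZ /=.
rewrite mulmxA mxtrace_mulC trace_mx11.
have e : forall (M : 'M[R]_1), M 0 0 = M^T 0 0 by move=> M; rewrite mxE.
have := h p hp; rewrite e !trmx_mul !trmxK => ->.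
by rewrite mulr0.
Qed.

Arguments block_Q {R m r A B}.
Arguments span_zero {R n r Us Om P}.
Arguments tr_sq_eq0 {R m p M}.

Lemma entry_row (R : realType) n r (A B : 'M[R]_(n, r)) k l :
  (A *m B^T) k l = (row k A *m (row l B)^T) 0 0.
Proof. by rewrite !mxE; apply: eq_bigr => j _; rewrite !mxE. Qed.
Arguments entry_row {R n r}.

Lemma Fobj_ge0 (R : realType) n r (M : 'M[R]_n) (V : 'M[R]_(n, r)) : 0 <= Fobj M V.
Proof.
rewrite /Fobj /frob2; apply: mulr_ge0; first by rewrite invr_ge0.
by apply: sumr_ge0 => i _; apply: sumr_ge0 => j _; apply: sqr_ge0.
Qed.

Theorem theorem3p3 (R : realType) (n r : nat) (Ustar : 'M[R]_(n, r))
  (* orthants C_0, ..., C_(2^r - 1), given by their sign patterns *)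
  (sigma : nat -> {ffun 'I_r -> bool})
  (* J k = index i of the part J_i containing row k *)
  (J : 'I_n -> nat) :
  (1 <= r)%N -> (r <= n)%N ->
  (* sigma enumerates the 2^r orthants without repetition *)
  (forall i j, (i < 2 ^ r)%N -> (j < 2 ^ r)%N -> sigma i = sigma j -> i = j) ->
  (* consecutive orthants differ in exactly one coordinate *)
  (forall i, (i.+1 < 2 ^ r)%N ->
     #|[set j : 'I_r | sigma i j != sigma i.+1 j]| = 1%N) ->
  (* J_0, ..., J_(2^r-1) partition [n], with u_k in C_i for k in J_i *)
  (forall k, (J k < 2 ^ r)%N) ->
  (forall k, in_orthant (sigma (J k)) (row k Ustar)) ->
  (* (1) rank U_i^star = r *)
  (forall i, (i < 2 ^ r)%N ->
     \rank (subrows [set k | J k == i] Ustar) = r) ->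
  (* (2) conditions on Omega_{i+1,i} *)
  (forall i, (i.+1 < 2 ^ r)%N ->
     let Om := [set p : 'I_n * 'I_n |
                 [&& J p.1 == i.+1, J p.2 == i & 0 <= (Ustar *m Ustar^T) p.1 p.2]] in
     (r ^ 2 <= #|Om|)%N /\
     (forall A : 'M[R]_r, exists c : 'I_n * 'I_n -> R,
        A = \sum_(p in Om) c p *: ((row p.1 Ustar)^T *m row p.2 Ustar))) ->
  forall U : 'M[R]_(n, r),
    (forall V : 'M[R]_(n, r), Fobj (Ustar *m Ustar^T) U <= Fobj (Ustar *m Ustar^T) V)
    <-> U *m U^T = Ustar *m Ustar^T.
Proof.
move=> _ _ _ _ hJ hort hrk hOm U.
set M := Ustar *m Ustar^T.
split; last first.
  move=> hUU V.
  have -> : Fobj M U = 0.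
    rewrite /Fobj hUU subrr /frob2.
    apply/eqP; rewrite mulf_eq0; apply/orP; right; apply/eqP.
    apply: big1 => i _; apply: big1 => j _.
    by rewrite /maskmx !mxE; case: ifP => _; rewrite ?mxE expr0n.
  exact: Fobj_ge0.
move=> hmin.
have hF : Fobj M U = 0.
  apply/eqP; rewrite eq_le Fobj_ge0 andbT.
  have := hmin Ustar; rewrite /Fobj subrr.
  suff -> : frob2 (maskmx (relu_set M) (0 : 'M[R]_n)) = 0 by rewrite mulr0.
  rewrite /frob2; apply: big1 => i _; apply: big1 => j _.
  by rewrite /maskmx !mxE; case: ifP => _; rewrite ?mxE expr0n.
have hzero : forall k l, 0 <= M k l -> (U *m U^T) k l = M k l.
  move=> k l hkl.
  move: hF; rewrite /Fobj => /eqP; rewrite mulf_eq0.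
  have h4 : ((4:R)^-1 == 0) = false by rewrite invr_eq0 pnatr_eq0.
  rewrite h4 /=.
  have h1 : forall i : 'I_n, true -> 0 <= \sum_(j < n) (maskmx (relu_set M) (U *m U^T - M)) i j ^+ 2.
    by move=> i _; apply: sumr_ge0 => j _; apply: sqr_ge0.
  rewrite /frob2 => /eqP /(psumr_eq0P h1) /(_ k isT).
  have h2 : forall j : 'I_n, true -> 0 <= (maskmx (relu_set M) (U *m U^T - M)) k j ^+ 2.
    by move=> j _; apply: sqr_ge0.
  move=> /(psumr_eq0P h2) /(_ l isT) /eqP; rewrite sqrf_eq0 /maskmx mxE /relu_set /= hkl.
  by rewrite !mxE subr_eq0 => /eqP.
have horth : forall k l, J k = J l -> 0 <= M k l.
  move=> k l hkl; rewrite /M mxE; apply: sumr_ge0 => j _; rewrite mxE.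
  have := hort k j; have := hort l j; rewrite -hkl !mxE.
  by case: (sigma (J k) j) => a b; [apply: mulr_ge0 | apply: mulr_le0].
pose props i (Q : 'M[R]_r) :=
  Q *m Q^T = 1%:M /\ forall k, J k = i -> row k U = row k Ustar *m Q.
have hblock : forall i, (i < 2 ^ r)%N -> exists Q, props i Q.
  move=> i hi.
  set S := [set k | J k == i].
  have hAB : subrows S Ustar *m (subrows S Ustar)^T = subrows S U *m (subrows S U)^T.
    apply/matrixP => a b.
    have ea : J (enum_val a) = i by have := enum_valP a; rewrite inE => /eqP.
    have eb : J (enum_val b) = i by have := enum_valP b; rewrite inE => /eqP.
    have e : forall (V : 'M[R]_(n, r)), (subrows S V *m (subrows S V)^T) a b
               = (V *m V^T) (enum_val a) (enum_val b).
      by move=> V; rewrite !mxE; apply: eq_bigr => j _; rewrite !mxE.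
    rewrite !e hzero //; apply: horth; by rewrite ea eb.
  have [Q [hQ hBQ]] := block_Q (hrk i hi) hAB.
  exists Q; split => // k hk.
  have kS : k \in S by rewrite inE hk.
  have -> : row k U = row (enum_rank_in kS k) (subrows S U).
    by apply/rowP => j; rewrite !mxE enum_rankK_in.
  rewrite hBQ row_mul; congr (_ *m _).
  by apply/rowP => j; rewrite !mxE enum_rankK_in.
have hstep : forall i Q0 Q1, (i.+1 < 2 ^ r)%N -> props i Q0 -> props i.+1 Q1 -> Q1 = Q0.
  move=> i Q0 Q1 hi [h0 h0r] [h1 h1r].
  have [_ hsp] := hOm i hi.
  have hP : Q1 *m Q0^T - 1%:M = 0.
    apply: span_zero hsp => p; rewrite inE => /and3P [/eqP e1 /eqP e2 hp].
    have eB : forall (X Y : 'M[R]_1), (X - Y) 0 0 = X 0 0 - Y 0 0 by move=> X Y; rewrite !mxE.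
    rewrite mulmxBr mulmx1 mulmxBl eB -(entry_row Ustar Ustar).
    rewrite mulmxA -(mulmxA _ Q0^T) -trmx_mul -h1r // -h0r // -(entry_row U U).
    by rewrite hzero // subrr.
  have e : Q1 *m Q0^T = 1%:M by apply/eqP; rewrite -subr_eq0 hP.
  have h0' : Q0^T *m Q0 = 1%:M by apply: mulmx1C.
  by rewrite -[Q1]mulmx1 -h0' mulmxA e mul1mx.
have [Q0 [hQ0 hQ0r]] := hblock 0%N (expn_gt0 2 r).
have hall : forall i, (i < 2 ^ r)%N -> forall k, J k = i -> row k U = row k Ustar *m Q0.
  elim=> [|i IH] hi //.
  have [Q1 hQ1] := hblock i.+1 hi.
  have IH' := IH (ltnW hi).
  have e := hstep i Q0 Q1 hi (conj hQ0 IH') hQ1.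
  by move: hQ1 => [_]; rewrite e.
have hU : U = Ustar *m Q0.
  by apply/row_matrixP => k; rewrite row_mul (hall (J k) (hJ k)).
by rewrite hU trmx_mul mulmxA -(mulmxA Ustar) hQ0 mulmx1.
Qed.
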